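(* Let $u,v>0$ and $0<a\le 1$, and consider the map $(x,y)\mapsto\big((1-a)x+auy(1-y),\ (1-a)y+avx(1-x)\big)$ (Kopel's map with $b=a$). Define $R_1=u^2v^2-4u^2v-4uv^2+18uv-27$ and $H_3=a^3u^3v^3-4a^3u^3v^2-4a^3u^2v^3+17a^3u^2v^2+4a^3u^2v+4a^3uv^2-2a^2u^2v^2-45a^3uv+8a^2u^2v+8a^2uv^2-36a^2uv+27a^3-4auv+54a^2+36a+8$. If either ($uv>1$, $R_1<0$, $H_3>0$) or ($uv>1$, $R_1>0$, $H_3<0$), then the map has exactly one locally stable positive equilibrium.
   Context: An equilibrium is a real fixed point $(x^*,y^* )$; it is positive if $x^*,y^*>0$. It is called (locally) stable if both eigenvalues of the Jacobian $\begin{pmatrix}1-a & ua(1-2y^* )\\ va(1-2x^* ) & 1-a\end{pmatrix}$ at it have modulus less than $1$, equivalently the Jury conditions $1-\mathrm{Tr}(J)+\mathrm{Det}(J)>0$, $1+\mathrm{Tr}(J)+\mathrm{Det}(J)>0$, $1-\mathrm{Det}(J)>0$ hold. *)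

(* Defs.v *)
From Stdlib Require Import Reals.
Open Scope R_scope.

Definition kopel (u v a : R) (p : R * R) : R * R :=
  let (x, y) := p in
  ((1 - a) * x + a * u * y * (1 - y), (1 - a) * y + a * v * x * (1 - x)).

Definition is_equilibrium (u v a x y : R) : Prop :=
  kopel u v a (x, y) = (x, y).

Definition is_positive_equilibrium (u v a x y : R) : Prop :=
  is_equilibrium u v a x y /\ 0 < x /\ 0 < y.

Definition J11 (u v a x y : R) : R := 1 - a.
Definition J12 (u v a x y : R) : R := u * a * (1 - 2 * y).
Definition J21 (u v a x y : R) : R := v * a * (1 - 2 * x).
Definition J22 (u v a x y : R) : R := 1 - a.

Definition trJ (u v a x y : R) : R := J11 u v a x y + J22 u v a x y.
Definition detJ (u v a x y : R) : R :=
  J11 u v a x y * J22 u v a x y - J12 u v a x y * J21 u v a x y.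

(* Local stability via the Jury conditions (equivalent, for a real 2x2
   matrix, to both eigenvalues having modulus < 1). *)
Definition locally_stable (u v a x y : R) : Prop :=
  1 - trJ u v a x y + detJ u v a x y > 0 /\
  1 + trJ u v a x y + detJ u v a x y > 0 /\
  1 - detJ u v a x y > 0.

Definition R1poly (u v : R) : R :=
  u^2*v^2 - 4*u^2*v - 4*u*v^2 + 18*u*v - 27.

Definition H3poly (u v a : R) : R :=
  a^3*u^3*v^3 - 4*a^3*u^3*v^2 - 4*a^3*u^2*v^3 + 17*a^3*u^2*v^2
  + 4*a^3*u^2*v + 4*a^3*u*v^2 - 2*a^2*u^2*v^2 - 45*a^3*u*v
  + 8*a^2*u^2*v + 8*a^2*u*v^2 - 36*a^2*u*v + 27*a^3 - 4*a*u*v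
  + 54*a^2 + 36*a + 8.

(* Main.v *)
Require Import Defs.
From Stdlib Require Import Reals Lra Psatz.
Open Scope R_scope.

Definition Gf u v y := u*v*(1-y)*(1-u*y*(1-y)) - 1.
Definition Gpf u v y := -3*u^2*v*y^2 + 4*u^2*v*y - u*v*(u+1).
Definition aphi u v a y := a*y*Gpf u v y + 2.

Lemma eq_char u v a x y : 0<u -> 0<v -> 0<a ->
  is_positive_equilibrium u v a x y <-> (x = u*y*(1-y) /\ Gf u v y = 0 /\ 0<y /\ y<1).
Proof.
intros Hu Hv Ha; unfold is_positive_equilibrium, is_equilibrium, kopel, Gf; split.
- intros [H [Hx Hy]]. injection H as H1 H2.
  assert (Ex : x = u*y*(1-y)).
  { apply Rmult_eq_reg_l with a; [|lra]. nra. }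
  assert (Ey : y = v*x*(1-x)).
  { apply Rmult_eq_reg_l with a; [|lra]. nra. }
  subst x. split; [reflexivity|]. split.
  + apply Rmult_eq_reg_l with y; [|lra]. nra.
  + split; [lra|]. destruct (Rlt_or_le y 1); [assumption|].
    assert (u*y*(1-y) <= 0). { assert (0 <= u*y*(y-1)) by (apply Rmult_le_pos; nra). nra. } lra.
- intros [Ex [HG [Hy0 Hy1]]]. subst x.
  assert (Hx : 0 < u*y*(1-y)) by (apply Rmult_lt_0_compat; nra).
  split; [|split; [exact Hx| exact Hy0]].
  f_equal.
  + ring.
  + assert (E: v*(u*y*(1-y))*(1-u*y*(1-y)) = y).
    { assert (y*(u*v*(1-y)*(1-u*y*(1-y)) - 1) = 0) by (rewrite HG; ring). nra. }
    replace (a*v*(u*y*(1-y))*(1-u*y*(1-y))) with (a*(v*(u*y*(1-y))*(1-u*y*(1-y)))) by ring. rewrite E. ring.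
Qed.

Lemma P_id u v y : u*v*(1-2*(u*y*(1-y)))*(1-2*y) = 1 + Gf u v y + y*Gpf u v y.
Proof. unfold Gf, Gpf. ring. Qed.

Lemma stab_char u v a x y : 0<a -> a<=1 -> 0 < y -> x = u*y*(1-y) -> Gf u v y = 0 ->
  locally_stable u v a x y <-> (Gpf u v y < 0 /\ aphi u v a y > 0).
Proof.
intros Ha Ha1 Hy Ex HG. subst x.
assert (HP := P_id u v y). rewrite HG in HP.
unfold locally_stable, trJ, detJ, J11, J12, J21, J22, aphi.
set (P := u*v*(1-2*(u*y*(1-y)))*(1-2*y)) in HP.
assert (E: u * a * (1 - 2 * y) * (v * a * (1 - 2 * (u * y * (1 - y)))) = a^2 * P) by (unfold P; ring).
rewrite E. set (D := Gpf u v y) in *.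
split.
- intros [H1 [H2 H3]]. split.
  + assert (a^2*(-(y*D)) > 0) by nra.
    assert (- (y*D) > 0). { destruct (Rle_or_lt (-(y*D)) 0) as [h|h]; [|lra]. assert (0 <= a^2) by nra. nra. }
    nra.
  + assert (a*(a*y*D+2) > 0) by nra. nra.
- intros [H1 H2]. assert (y*D < 0) by nra. split; [|split].
  + rewrite HP. assert (0 < a^2) by nra. assert (0 < a^2 * (-(y*D))) by (apply Rmult_lt_0_compat; lra). nra.
  + rewrite HP. assert (0 < a^2) by nra. assert (0 < a^2 * (-(y*D))) by (apply Rmult_lt_0_compat; lra). nra.
  + rewrite HP. nra.
Qed.

Definition Disc c3 c2 c1 c0 := 18*c3*c2*c1*c0 - 4*c2^3*c0 + c2^2*c1^2 - 4*c3*c1^3 - 27*c3^2*c0^2.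

Lemma disc_R1 u v : Disc (-(u^2*v)) (2*u^2*v) (-(u*v*(u+1))) (u*v-1) = u^4*v^2*R1poly u v.
Proof. unfold Disc, R1poly. ring. Qed.

Definition q2 u v (y0:R) := -(u^2*v).
Definition q1 u v y0 := 2*u^2*v + y0*q2 u v y0.
Definition q0 u v y0 := -(u*v*(u+1)) + y0*q1 u v y0.
Definition Qf u v y0 y := q2 u v y0*y^2 + q1 u v y0*y + q0 u v y0.
Definition dQ u v y0 := (q1 u v y0)^2 - 4*q2 u v y0*q0 u v y0.

Lemma G_fact u v y0 y : Gf u v y = (y - y0) * Qf u v y0 y + Gf u v y0.
Proof. unfold Gf, Qf, q0, q1, q2. ring. Qed.

Lemma Gp_Q u v y0 : Gpf u v y0 = Qf u v y0 y0.
Proof. unfold Gpf, Qf, q0, q1, q2. ring. Qed.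

Lemma disc_Q u v y0 : Gf u v y0 = 0 -> u^4*v^2*R1poly u v = dQ u v y0 * (Qf u v y0 y0)^2.
Proof.
intro H. rewrite <- disc_R1.
replace (u*v-1) with (-(y0*q0 u v y0)).
- unfold Disc, dQ, Qf, q0, q1, q2. ring.
- unfold Gf, q0, q1, q2 in *. lra.
Qed.

Definition e2 y1 y2 := y1*y2 + (y1+y2)*(2-y1-y2).
Definition e3 y1 y2 := y1*y2*(2-y1-y2).
Definition alpha u v y1 y2 := -(u*v*(u+1)) + u^2*v*e2 y1 y2.
Definition beta u v y1 y2 := u*v-1 - u^2*v*e3 y1 y2.

Lemma G3 u v y1 y2 y : Gf u v y =
  -(u^2*v)*(y-y1)*(y-y2)*(y-(2-y1-y2)) + alpha u v y1 y2*y + beta u v y1 y2.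
Proof. unfold Gf, alpha, beta, e2, e3. ring. Qed.

Lemma Gp3 u v y1 y2 y : Gpf u v y =
  -(u^2*v)*((y-y2)*(y-(2-y1-y2)) + (y-y1)*(y-(2-y1-y2)) + (y-y1)*(y-y2)) + alpha u v y1 y2.
Proof. unfold Gpf, alpha, beta, e2, e3. ring. Qed.

Lemma ab0 u v y1 y2 : Gf u v y1 = 0 -> Gf u v y2 = 0 -> y1 <> y2 ->
  alpha u v y1 y2 = 0 /\ beta u v y1 y2 = 0.
Proof.
intros H1 H2 Hn.
rewrite (G3 u v y1 y2) in H1, H2.
assert (E: alpha u v y1 y2 * (y1 - y2) = 0) by nra.
apply Rmult_integral in E. destruct E as [E|E]; [|exfalso; apply Hn; lra].
split; [exact E|]. rewrite E in H1. nra.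
Qed.

Lemma disc3 u v y1 y2 : alpha u v y1 y2 = 0 -> beta u v y1 y2 = 0 ->
  u^4*v^2*R1poly u v = (u^2*v)^4*((y1-y2)*(y1-(2-y1-y2))*(y2-(2-y1-y2)))^2.
Proof.
intros Ha Hb. rewrite <- disc_R1. unfold alpha, beta in *.
replace (-(u*v*(u+1))) with (-(u^2*v*e2 y1 y2)) by lra.
replace (u*v-1) with (u^2*v*e3 y1 y2) by lra.
unfold Disc, e2, e3. ring.
Qed.

Lemma H3_3 u v a y1 y2 : 0 < u -> 0 < v -> alpha u v y1 y2 = 0 -> beta u v y1 y2 = 0 ->
  H3poly u v a = aphi u v a y1 * aphi u v a y2 * aphi u v a (2-y1-y2).
Proof.
intros Hu Hv Ha Hb. unfold alpha, beta in *.
set (E2 := e2 y1 y2) in *. set (E3 := e3 y1 y2) in *.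
assert (Hu' : u*(E2-1) = 1).
{ apply Rmult_eq_reg_l with (u*v); [|nra]. nra. }
assert (Hv' : v*(u - u^2*E3) = 1) by nra.
assert (HE2 : E2 - 1 <> 0). { intro h. rewrite h in Hu'. lra. }
assert (Hw : u - u^2*E3 <> 0). { intro h. rewrite h in Hv'. lra. }
assert (HW : E2 - 1 - E3 <> 0). { intro h. apply Hw. replace (u - u^2*E3) with (u*(u*(E2-1)) - u^2*E3) by (rewrite Hu'; ring). replace E3 with (E2-1) by lra. ring. }
assert (Eu : u = / (E2-1)). { field_simplify_eq; [lra|exact HE2]. }
assert (Ev : v = / (u - u^2*E3)). { field_simplify_eq; [lra|exact Hw]. }
rewrite Ev in *. clear Ev Hv'.
rewrite Eu in *. clear Eu Hu'.
unfold H3poly, aphi, Gpf, E2, E3, e2, e3 in *.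
field. unfold E2, E3 in HE2, HW. split; assumption.
Qed.


Definition alQ u v a y0 :=
  a*(-(u*v*(u+1)))*(q2 u v y0)^2 - 3*a*(-(u^2*v))*q0 u v y0*q2 u v y0
  - 2*a*(2*u^2*v)*q1 u v y0*q2 u v y0 + 3*a*(-(u^2*v))*(q1 u v y0)^2.
Definition beQ u v a y0 :=
  2*(q2 u v y0)^2 - 2*a*(2*u^2*v)*q0 u v y0*q2 u v y0 + 3*a*(-(u^2*v))*q1 u v y0*q0 u v y0.
Definition MQ u v a y0 :=
  q0 u v y0*(alQ u v a y0)^2 - q1 u v y0*alQ u v a y0*beQ u v a y0 + q2 u v y0*(beQ u v a y0)^2.

Lemma H3_1 u v a y0 : Gf u v y0 = 0 ->
  (q2 u v y0)^5 * H3poly u v a = aphi u v a y0 * MQ u v a y0.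
Proof.
intros H. unfold Gf in H.
set (w := (1-y0)*(1-u*y0*(1-y0))) in *.
assert (Hw : u*w <> 0). { intro h. assert (u*v*(1-y0)*(1-u*y0*(1-y0)) = v*(u*w)) by (unfold w; ring). rewrite h in H0. lra. }
assert (Ev : v = / (u*w)). { field_simplify_eq; [|split; intro hh; apply Hw; rewrite hh; ring]. unfold w in *. lra. }
clear H. rewrite Ev. unfold MQ, alQ, beQ, q0, q1, q2, H3poly, aphi, Gpf, w in *.
field. split; [|split]; intro hh; apply Hw; rewrite hh; ring.
Qed.

Lemma root_pos u v y : 0<u -> 0<v -> u*v>1 -> Gf u v y = 0 -> 0 < y /\ y < 1.
Proof.
intros Hu Hv Huv H. unfold Gf in H. split.
- destruct (Rlt_or_le 0 y) as [h|h]; [exact h|exfalso].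
  assert (h1 : 1 <= 1 - y) by lra.
  assert (h2 : 1 <= 1 - u*y*(1-y)). { assert (0 <= u*((-y)*(1-y))) by (apply Rmult_le_pos; nra). nra. }
  assert (1 <= (1-y)*(1-u*y*(1-y))) by nra.
  assert (u*v*1 <= u*v*((1-y)*(1-u*y*(1-y)))) by (apply Rmult_le_compat_l; nra).
  nra.
- destruct (Rlt_or_le y 1) as [h|h]; [exact h|exfalso].
  assert (h2 : 1 <= 1 - u*y*(1-y)). { assert (0 <= u*(y*(y-1))) by (apply Rmult_le_pos; nra). nra. }
  assert ((1-y)*(1-u*y*(1-y)) <= 0) by nra.
  assert (u*v*((1-y)*(1-u*y*(1-y))) <= 0).
  { assert (0 <= u*v) by nra. nra. }
  nra.
Qed.

Lemma root_exists u v : 0<u -> 0<v -> u*v>1 -> exists y, Gf u v y = 0.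
Proof.
intros Hu Hv Huv.
assert (Hc : continuity (fun y => - Gf u v y)) by (unfold Gf; reg).
destruct (IVT (fun y => - Gf u v y) 0 1 Hc) as [z [_ Hz]].
- lra.
- unfold Gf. lra.
- unfold Gf. lra.
- exists z. lra.
Qed.

Lemma sign3 g1 g2 g3 f1 f2 f3 : g1*g2*g3 > 0 -> g1*g2+g1*g3+g2*g3 = 0 -> f1*f2*f3 < 0 ->
  (g1 > 0 -> f1 > 0) -> (g2 > 0 -> f2 > 0) -> (g3 > 0 -> f3 > 0) ->
  (g1 < 0 /\ f1 > 0) \/ (g2 < 0 /\ f2 > 0) \/ (g3 < 0 /\ f3 > 0).
Proof.
intros Hp Hs Hf H1 H2 H3.
assert (n1 : g1 <> 0) by (intro hh; rewrite hh in Hp; lra).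
assert (n2 : g2 <> 0) by (intro hh; rewrite hh in Hp; lra).
assert (n3 : g3 <> 0) by (intro hh; rewrite hh in Hp; lra).
assert (m1 : f1 <> 0) by (intro hh; rewrite hh in Hf; lra).
assert (m2 : f2 <> 0) by (intro hh; rewrite hh in Hf; lra).
assert (m3 : f3 <> 0) by (intro hh; rewrite hh in Hf; lra).
destruct (Rlt_or_le g1 0) as [a1|a1]; [destruct (Rlt_or_le 0 f1) as [b1|b1]; [left; lra|]|].
all: destruct (Rlt_or_le g2 0) as [a2|a2]; [destruct (Rlt_or_le 0 f2) as [b2|b2]; [right; left; lra|]|].
all: destruct (Rlt_or_le g3 0) as [a3|a3]; [destruct (Rlt_or_le 0 f3) as [b3|b3]; [right; right; lra|]|].
all: exfalso.
all: repeat match goal with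
  | h : 0 <= ?g, n : ?g <> 0 |- _ => assert (0 < g) by lra; clear h
  | h : ?f <= 0, n : ?f <> 0 |- _ => assert (f < 0) by lra; clear h
  end.
all: try (specialize (H1 ltac:(lra))); try (specialize (H2 ltac:(lra))); try (specialize (H3 ltac:(lra))).
all: first [ assert (0 < g1*g2) by nra | assert (g1*g2 < 0) by nra ].
all: first [ assert (0 < f1*f2) by nra | assert (f1*f2 < 0) by nra ].
all: nra.
Qed.

Lemma gprod u v y1 y2 : alpha u v y1 y2 = 0 ->
  Gpf u v y1 * Gpf u v y2 * Gpf u v (2-y1-y2) =
    (u^2*v)^3 * ((y1-y2)*(y1-(2-y1-y2))*(y2-(2-y1-y2)))^2 /\
  Gpf u v y1 * Gpf u v y2 + Gpf u v y1 * Gpf u v (2-y1-y2) + Gpf u v y2 * Gpf u v (2-y1-y2) = 0.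
Proof.
intro Ha. rewrite !(Gp3 u v y1 y2). rewrite Ha. split; ring.
Qed.

Lemma uniq2 u v a y1 y2 : 0<u -> 0<v -> 0<a -> u*v>1 -> R1poly u v > 0 -> H3poly u v a < 0 ->
  Gf u v y1 = 0 -> Gf u v y2 = 0 -> Gpf u v y1 < 0 -> Gpf u v y2 < 0 ->
  aphi u v a y1 > 0 -> aphi u v a y2 > 0 -> y1 = y2.
Proof.
intros Hu Hv Ha Huv HR HH G1 G2 g1 g2 f1 f2.
destruct (Req_dec y1 y2) as [e|n]; [exact e|exfalso].
destruct (ab0 u v y1 y2 G1 G2 n) as [Hal Hbe].
assert (G3' : Gf u v (2-y1-y2) = 0) by (rewrite (G3 u v y1 y2), Hal, Hbe; ring).
destruct (root_pos u v _ Hu Hv Huv G3') as [p3 _].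
assert (Hd := disc3 u v y1 y2 Hal Hbe).
set (sq := (y1-y2)*(y1-(2-y1-y2))*(y2-(2-y1-y2))) in *.
assert (Hsq : 0 < sq^2).
{ assert (0 < u^4*v^2*R1poly u v) by (apply Rmult_lt_0_compat; [|exact HR]; apply Rmult_lt_0_compat; apply pow_lt; lra).
  destruct (Req_dec sq 0) as [z|z]. { rewrite z in Hd. lra. } nra. }
destruct (gprod u v y1 y2 Hal) as [Hp _]. fold sq in Hp.
assert (Huv3 : 0 < (u^2*v)^3) by (apply pow_lt; apply Rmult_lt_0_compat; [apply pow_lt|]; lra).
assert (0 < Gpf u v y1 * Gpf u v y2) by nra.
assert (g3 : 0 < Gpf u v (2-y1-y2)).
{ destruct (Rlt_or_le 0 (Gpf u v (2-y1-y2))) as [h|h]; [exact h|].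
  assert (Gpf u v y1 * Gpf u v y2 * Gpf u v (2-y1-y2) <= 0) by nra. nra. }
assert (f3 : aphi u v a (2-y1-y2) > 0).
{ unfold aphi. assert (0 < a*(2-y1-y2)*Gpf u v (2-y1-y2)) by (apply Rmult_lt_0_compat; [nra|lra]). lra. }
rewrite (H3_3 u v a y1 y2 Hu Hv Hal Hbe) in HH.
assert (0 < aphi u v a y1 * aphi u v a y2) by nra. nra.
Qed.

Lemma Q_sq u v y0 y : 4*q2 u v y0*Qf u v y0 y = (2*q2 u v y0*y + q1 u v y0)^2 - dQ u v y0.
Proof. unfold Qf, dQ. ring. Qed.

Lemma M_sq u v a y0 : 4*q2 u v y0*MQ u v a y0 =
  (2*q2 u v y0*beQ u v a y0 - q1 u v y0*alQ u v a y0)^2 - dQ u v y0*(alQ u v a y0)^2.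
Proof. unfold MQ, dQ. ring. Qed.

Lemma q2neg u v y0 : 0<u -> 0<v -> q2 u v y0 < 0.
Proof. intros. unfold q2. assert (0 < u^2*v) by (apply Rmult_lt_0_compat; [apply pow_lt|]; lra). lra. Qed.

Lemma pos4 u v : 0<u -> 0<v -> 0 < u^4*v^2.
Proof. intros. apply Rmult_lt_0_compat; apply pow_lt; lra. Qed.

Definition goal_y u v a := exists y, Gf u v y = 0 /\ (Gpf u v y < 0 /\ aphi u v a y > 0) /\
  forall y', Gf u v y' = 0 -> Gpf u v y' < 0 -> aphi u v a y' > 0 -> y' = y.

Lemma case1 u v a : 0<u -> 0<v -> 0<a -> u*v>1 -> R1poly u v < 0 -> H3poly u v a > 0 -> goal_y u v a.
Proof.
intros Hu Hv Ha Huv HR HH.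
destruct (root_exists u v Hu Hv Huv) as [y0 Hy0].
assert (Hd := disc_Q u v y0 Hy0).
assert (H4 := pos4 u v Hu Hv).
assert (hq := q2neg u v y0 Hu Hv).
assert (HdQ : dQ u v y0 < 0).
{ destruct (Rlt_or_le (dQ u v y0) 0) as [h|h]; [exact h|].
  assert (0 <= dQ u v y0 * (Qf u v y0 y0)^2) by (apply Rmult_le_pos; [exact h|apply pow2_ge_0]). nra. }
assert (Qneg : forall y, Qf u v y0 y < 0).
{ intro y. assert (E := Q_sq u v y0 y).
  assert (0 < 4*q2 u v y0*Qf u v y0 y) by (rewrite E; assert (0 <= (2*q2 u v y0*y + q1 u v y0)^2) by apply pow2_ge_0; lra).
  nra. }
exists y0. split; [exact Hy0|split; [split|]].
- rewrite Gp_Q. apply Qneg.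
- assert (E := H3_1 u v a y0 Hy0).
  assert (EM := M_sq u v a y0).
  assert (0 <= 4*q2 u v y0*MQ u v a y0).
  { rewrite EM. assert (0 <= (2*q2 u v y0*beQ u v a y0 - q1 u v y0*alQ u v a y0)^2) by apply pow2_ge_0.
    assert (0 <= (alQ u v a y0)^2) by apply pow2_ge_0. nra. }
  assert (MQ u v a y0 <= 0) by nra.
  assert ((q2 u v y0)^5 < 0).
  { replace ((q2 u v y0)^5) with (q2 u v y0 * ((q2 u v y0)^2)^2) by ring.
    assert (0 < ((q2 u v y0)^2)^2) by (apply pow_lt; nra). nra. }
  assert ((q2 u v y0)^5 * H3poly u v a < 0) by nra.
  destruct (Rlt_or_le 0 (aphi u v a y0)) as [h|h]; [exact h|]. nra.
- intros y' Hy' _ _. rewrite (G_fact u v y0 y'), Hy0 in Hy'.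
  assert (Qf u v y0 y' < 0) by apply Qneg.
  assert (y' - y0 = 0) by nra. lra.
Qed.

Lemma case2 u v a : 0<u -> 0<v -> 0<a -> u*v>1 -> R1poly u v > 0 -> H3poly u v a < 0 -> goal_y u v a.
Proof.
intros Hu Hv Ha Huv HR HH.
destruct (root_exists u v Hu Hv Huv) as [y0 Hy0].
assert (Hd := disc_Q u v y0 Hy0).
assert (H4 := pos4 u v Hu Hv).
assert (hq := q2neg u v y0 Hu Hv).
assert (HdQ : 0 < dQ u v y0 /\ Qf u v y0 y0 <> 0).
{ assert (0 < dQ u v y0 * (Qf u v y0 y0)^2) by (rewrite <- Hd; apply Rmult_lt_0_compat; lra).
  destruct (Req_dec (Qf u v y0 y0) 0) as [z|z]. { rewrite z in H. lra. }
  split; [|exact z]. destruct (Rlt_or_le 0 (dQ u v y0)) as [h|h]; [exact h|].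
  assert (0 <= (Qf u v y0 y0)^2) by apply pow2_ge_0. nra. }
destruct HdQ as [HdQ HQ0].
set (s := sqrt (dQ u v y0)).
assert (Hs : s*s = dQ u v y0) by (apply sqrt_sqrt; lra).
set (r := (- q1 u v y0 + s)/(2*q2 u v y0)).
assert (Hr : 2*q2 u v y0*r + q1 u v y0 = s) by (unfold r; field; lra).
assert (HQr : Qf u v y0 r = 0).
{ assert (E := Q_sq u v y0 r). rewrite Hr in E. assert (4*q2 u v y0*Qf u v y0 r = 0) by nra.
  assert (4*q2 u v y0 <> 0) by lra. apply Rmult_integral in H. destruct H; [contradiction|assumption]. }
assert (Gr : Gf u v r = 0) by (rewrite (G_fact u v y0 r), HQr, Hy0; ring).
assert (Hn : y0 <> r). { intro e. apply HQ0. rewrite e at 2. exact HQr. }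
destruct (ab0 u v y0 r Hy0 Gr Hn) as [Hal Hbe].
assert (G3' : Gf u v (2-y0-r) = 0) by (rewrite (G3 u v y0 r), Hal, Hbe; ring).
assert (Hdd := disc3 u v y0 r Hal Hbe).
set (sq := (y0-r)*(y0-(2-y0-r))*(r-(2-y0-r))) in *.
assert (Hsq : 0 < sq^2).
{ assert (0 < u^4*v^2*R1poly u v) by (apply Rmult_lt_0_compat; lra).
  destruct (Req_dec sq 0) as [z|z]. { rewrite z in Hdd. lra. } nra. }
destruct (gprod u v y0 r Hal) as [Hp Hsum]. fold sq in Hp.
assert (Huv3 : 0 < (u^2*v)^3) by (apply pow_lt; apply Rmult_lt_0_compat; [apply pow_lt|]; lra).
assert (Hf := H3_3 u v a y0 r Hu Hv Hal Hbe).
destruct (root_pos u v y0 Hu Hv Huv Hy0) as [p0 _].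
destruct (root_pos u v r Hu Hv Huv Gr) as [pr _].
destruct (root_pos u v _ Hu Hv Huv G3') as [p3 _].
assert (imp : forall y, 0 < y -> Gpf u v y > 0 -> aphi u v a y > 0).
{ intros y hy hg. unfold aphi. assert (0 < a*y*Gpf u v y) by (apply Rmult_lt_0_compat; [nra|lra]). lra. }
assert (Hst := sign3 (Gpf u v y0) (Gpf u v r) (Gpf u v (2-y0-r))
  (aphi u v a y0) (aphi u v a r) (aphi u v a (2-y0-r))
  ltac:(rewrite Hp; nra) Hsum ltac:(rewrite <- Hf; exact HH)
  (imp y0 p0) (imp r pr) (imp _ p3)).
assert (U : forall y, Gf u v y = 0 -> Gpf u v y < 0 -> aphi u v a y > 0 -> goal_y u v a).
{ intros y Gy gy fy. exists y. split; [exact Gy|split; [split; assumption|]].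
  intros y' Gy' gy' fy'. exact (uniq2 u v a y' y Hu Hv Ha Huv HR HH Gy' Gy gy' gy fy' fy). }
destruct Hst as [[g f]|[[g f]|[g f]]].
- exact (U y0 Hy0 g f).
- exact (U r Gr g f).
- exact (U _ G3' g f).
Qed.

Theorem theorem3 (u v a : R) :
  0 < u -> 0 < v -> 0 < a -> a <= 1 ->
  ((u * v > 1 /\ R1poly u v < 0 /\ H3poly u v a > 0) \/
   (u * v > 1 /\ R1poly u v > 0 /\ H3poly u v a < 0)) ->
  exists x y : R,
    is_positive_equilibrium u v a x y /\ locally_stable u v a x y /\
    (forall x' y' : R,
       is_positive_equilibrium u v a x' y' -> locally_stable u v a x' y' ->
       x' = x /\ y' = y).
Proof.
intros Hu Hv Ha Ha1 Hc.
assert (Huv : u*v > 1) by (destruct Hc as [[h _]|[h _]]; exact h).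
assert (Hg : goal_y u v a).
{ destruct Hc as [[_ [h1 h2]]|[_ [h1 h2]]]; [apply case1|apply case2]; assumption. }
destruct Hg as [y [Gy [St Un]]].
destruct (root_pos u v y Hu Hv Huv Gy) as [y0 y1].
exists (u*y*(1-y)), y.
split; [apply eq_char; auto|split].
- apply (stab_char u v a _ y); auto.
- intros x' y' He Hs.
  apply (eq_char u v a x' y' Hu Hv Ha) in He. destruct He as [Ex [Gy' [p' _]]].
  apply (stab_char u v a x' y' Ha Ha1 p' Ex Gy') in Hs. destruct Hs as [g f].
  assert (y' = y) by (apply Un; assumption). subst y'. split; [exact Ex|reflexivity].
Qed.
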